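(* Fix $\kappa>0$ and $h\in(0,1)$. Let $G$ be a probability measure on $[h,1)$ and let $X_1,\dots,X_n\overset{iid}{\sim}f_G$, where $$f_G(x)=\int\frac{\Gamma(x+\kappa)}{x!\,\Gamma(\kappa)}p^\kappa(1-p)^x\,dG(p),\qquad x=0,1,\dots.$$ Let $t=-\log(1-h)/2>0$ and $A_h=\left(\frac{h}{1-\sqrt{1-h}}\right)^\kappa\in(0,\infty)$. For any $a>1$ let $K=\left\lceil\frac{a\log n+\log A_h}{t}\right\rceil$. Then for every integer $s\ge0$, $$\mathbb P_G(X_1\ge K+s)\le\frac{e^{-ts}}{n^a}.$$ *)

(* Defs.v *)
From HB Require Import structures.
From mathcomp Require Import all_boot all_order all_algebra.
From mathcomp Require Import all_classical all_reals all_analysis.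
Set Implicit Arguments. Unset Strict Implicit. Unset Printing Implicit Defensive.
Import Order.TTheory GRing.Theory Num.Theory.
Import numFieldNormedType.Exports.
Local Open Scope classical_set_scope.
Local Open Scope ring_scope.

Definition Gamma {R : realType} (z : R) : R :=
  Rintegral (@lebesgue_measure R) `]0%R, +oo[
    (fun x : R => x `^ (z - 1) * expR (- x)).

Definition negbin_pmf {R : realType} (kappa p : R) (x : nat) : R :=
  Gamma (x%:R + kappa) / (x`!%:R * Gamma kappa) * p `^ kappa * (1 - p) ^+ x.

Definition fG {R : realType} (G : probability R R) (kappa : R) (x : nat) : \bar R :=
  (\int[G]_p (negbin_pmf kappa p x)%:E)%E.

Definition tailG {R : realType} (G : probability R R) (kappa : R) (m : int) : \bar R :=
  (\sum_(x <oo | (m <= x%:Z)%R) fG G kappa x)%E.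

(* Main.v *)
Require Import Defs.
From HB Require Import structures.
From mathcomp Require Import all_boot all_order all_algebra.
From mathcomp Require Import all_classical all_reals all_analysis.
From mathcomp Require Import measurable_realfun ring lra.
Import Order.TTheory GRing.Theory Num.Theory.
Import numFieldNormedType.Exports.
Local Open Scope classical_set_scope.
Local Open Scope ring_scope.
Section S.
Context {R : realType}.
Local Notation mu := (@lebesgue_measure R).

Lemma scale_preimage_oc (c a b : R) : (0 < c)%R ->
  (fun x : R => c * x)%R @^-1` (`]a, b]%classic : set R) = (`]a / c, b / c]%classic : set R).
Proof.
move=> c0; apply/seteqP; split => x /=; rewrite !in_itv/= => /andP[h1 h2];
  apply/andP; split.
- by rewrite ltr_pdivrMr// mulrC.
- by rewrite ler_pdivlMr// mulrC.
- by rewrite -ltr_pdivrMl// mulrC.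
- by rewrite -ler_pdivlMl// mulrC.
Qed.

Local Open Scope ereal_scope.
Lemma lebesgue_scale (c : R) (c0 : (0 < c)%R) (A : set R) : measurable A ->
  mu A = c%:E * mu ((fun x : R => c * x)%R @^-1` A).
Proof.
move=> mA.
have mc : measurable_fun [set: measurableTypeR R] ((fun x : R => c * x)%R : measurableTypeR R -> measurableTypeR R) by exact: mulrl_measurable.
pose nu := measure_function_pushforward__canonical__measure_function_Measure mu mc.
have := @lebesgue_measure_unique R (mscale (NngNum (ltW c0)) nu).
move=> H; rewrite H//.
move=> /= _ [[a b]] _ <-.
rewrite /mscale /nu /=.
rewrite [X in _ = _ * X](_ : _ = mu `](a / c)%R, (b / c)%R]%classic); last first.
  by rewrite /pushforward/= scale_preimage_oc.
rewrite !lebesgue_measure_itv/=.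
rewrite !lte_fin ltr_pM2r ?invr_gt0//.
case: ifPn => ab; last by rewrite mule0.
rewrite -EFinB -EFinM.
by congr EFin; field; rewrite gt_eqF.
Qed.

Lemma integral_scale (c : R) (c0 : (0 < c)%R) (f : R -> \bar R) :
  measurable_fun (`]0%R, +oo[ : set R) f -> (forall x, (0 < x)%R -> 0 <= f x) ->
  \int[mu]_(x in `]0%R, +oo[) f x =
  c%:E * \int[mu]_(x in `]0%R, +oo[) f (c * x)%R.
Proof.
move=> mf f0.
have mc : measurable_fun [set: measurableTypeR R] ((fun x : R => c * x)%R : measurableTypeR R -> measurableTypeR R) by exact: mulrl_measurable.
pose nu := measure_function_pushforward__canonical__measure_function_Measure mu mc.
rewrite (@eq_measure_integral _ _ _ _ (mscale (NngNum (ltW c0)) nu)); last first.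
  by move=> A mA _; rewrite /= /mscale /nu /= -lebesgue_scale.
rewrite ge0_integral_mscale//; last first.
  by move=> x; rewrite /= in_itv/= andbT; apply: f0.
congr (_ * _).
rewrite /nu ge0_integral_pushforward//; last first.
  by move=> x; rewrite inE/= in_itv/= andbT; apply: f0.
have -> : (fun x : R => c * x)%R @^-1` `]0%R, +oo[ = `]0%R, +oo[%classic.
  apply/seteqP; split => x /=; rewrite !in_itv/= !andbT.
    by rewrite pmulr_rgt0.
  by move=> x0; rewrite mulr_gt0.
by [].
Qed.

Lemma mpow_exp (a b : R) (D : set R) :
  measurable_fun D (fun y : R => ((y `^ a)%R * expR (b * y))%:E).
Proof.
apply/measurable_EFinP; apply: measurable_funM.
  by apply: measurable_funTS; exact: measurable_powR.
apply: measurableT_comp => //; exact: mulrl_measurable.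
Qed.

Lemma mgam (a : R) (D : set R) :
  measurable_fun D (fun y : R => ((y `^ a)%R * expR (- y))%:E).
Proof.
rewrite (_ : (fun y : R => _) = (fun y : R => ((y `^ a)%R * expR (-1 * y))%:E)); first exact: mpow_exp.
by apply/funext => y; rewrite mulN1r.
Qed.

Definition gI (z : R) : \bar R :=
  \int[mu]_(y in `]0%R, +oo[) ((y `^ (z - 1))%R * expR (- y))%:E.

Lemma gI_ge0 z : 0 <= gI z.
Proof. by apply: integral_ge0 => y _; rewrite lee_fin mulr_ge0// ?powR_ge0 ?expR_ge0. Qed.

Lemma gI_scale (c : R) (c0 : (0 < c)%R) z :
  \int[mu]_(y in `]0%R, +oo[) ((y `^ (z - 1))%R * expR (- c * y))%:E =
  ((c `^ (- z))%R)%:E * gI z.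
Proof.
rewrite /gI [X in _ = _ * X](@integral_scale c c0); last 2 first.
- rewrite (_ : (fun y : R => _) = (fun y : R => ((y `^ (z - 1))%R * expR (-1 * y))%:E)); first exact: mpow_exp.
  by apply/funext => y; rewrite mulN1r.
- by move=> x _; rewrite lee_fin mulr_ge0// ?powR_ge0 ?expR_ge0.
have -> : \int[mu]_(x in `]0%R, +oo[) (((c * x) `^ (z - 1))%R * expR (- (c * x)))%:E = ((c `^ (z - 1))%R)%:E * \int[mu]_(y in `]0%R, +oo[) ((y `^ (z - 1))%R * expR (- c * y))%:E.
  rewrite -ge0_integralZl_EFin//; last 3 first.
  - by move=> x _; rewrite lee_fin mulr_ge0// ?powR_ge0 ?expR_ge0.
  - exact: mpow_exp.
  - exact: powR_ge0.
  apply: eq_integral => y; rewrite inE/= in_itv/= andbT => y0.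
  by rewrite -EFinM powRM ?(ltW c0) ?(ltW y0)// mulNr mulrA.
rewrite !muleA -!EFinM.

have -> : (c `^ (- z) * c * c `^ (z - 1) = 1)%R.
  rewrite -mulrA.
  rewrite -{2}(powRr1 (ltW c0)) -powRD; last by apply/implyP => _; rewrite gt_eqF.
  by rewrite addrC subrK powRN mulVf// gt_eqF// powR_gt0.
by rewrite mul1e.
Qed.

Lemma exp_eseries (z : R) :
  \sum_(n <oo) ((z ^+ n / n`!%:R)%R)%:E = (expR z)%:E.
Proof.
rewrite -EFin_lim; last exact: is_cvg_series_exp_coeff.
congr (limn _); apply/funext => n /=.
by rewrite sumEFin.
Qed.

Lemma gI_series (kappa r : R) : (0 <= r)%R -> (r < 1)%R ->
  \sum_(x <oo) (gI (x%:R + kappa) * ((r ^+ x / x`!%:R)%R)%:E) =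
  (((1 - r) `^ (- kappa))%R)%:E * gI kappa.
Proof.
move=> r0 r1.
have k0 x : (0 <= r ^+ x / x`!%:R)%R by rewrite divr_ge0// exprn_ge0.
rewrite -gI_scale ?subr_gt0//.
transitivity (\sum_(x <oo) \int[mu]_(y in `]0%R, +oo[)
   (((y `^ (kappa - 1))%R * expR (- y))%:E * (((r * y) ^+ x / x`!%:R)%R)%:E)).
  apply: eq_eseriesr => x _.
  rewrite /gI -ge0_integralZr//; last 3 first.
  all: try first [exact: mgam | by move=> y _; rewrite lee_fin mulr_ge0// ?powR_ge0 ?expR_ge0 | by rewrite lee_fin].
  apply: eq_integral => y; rewrite inE/= in_itv/= andbT => y0.
  rewrite -!EFinM; congr EFin.
  have -> : (y `^ (x%:R + kappa - 1) = y `^ (kappa - 1) * y ^+ x)%R.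
    rewrite (_ : (x%:R + kappa - 1 = (kappa - 1) + x%:R)%R); last by ring.
    rewrite powRD; last by apply/implyP => _; rewrite gt_eqF.
    by rewrite powR_mulrn// ltW.
  rewrite exprMn; field.
  by rewrite pnatr_eq0 -lt0n fact_gt0.
rewrite -integral_nneseries//; last 2 first.
  - move=> x; apply: emeasurable_funM; first exact: mgam.
    apply/measurable_EFinP; apply: measurable_funM => //.
    apply: measurable_funX; exact: mulrl_measurable.
  - move=> x y; rewrite /= in_itv/= andbT => y0.
    by rewrite -EFinM lee_fin mulr_ge0// ?mulr_ge0 ?powR_ge0 ?expR_ge0 ?divr_ge0 ?exprn_ge0 ?mulr_ge0// ltW.
apply: eq_integral => y; rewrite inE/= in_itv/= andbT => y0.
rewrite nneseriesZl; last by move=> x _; rewrite lee_fin divr_ge0// exprn_ge0// mulr_ge0// ltW.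
rewrite exp_eseries -EFinM; congr EFin.
by rewrite -mulrA -expRD; congr (_ * expR _)%R; ring.
Qed.

Lemma GammaE (z : R) : Gamma z = fine (gI z).
Proof. by []. Qed.

Lemma tail_pt (kappa p t : R) (m : int) : (0 < kappa)%R -> (0 <= p)%R -> (p <= 1)%R ->
  (0 <= t)%R -> ((1 - p) * expR t < 1)%R ->
  \sum_(x <oo | (m <= x%:Z)%R) (negbin_pmf kappa p x)%:E <=
  ((expR (- t * m%:~R) * (p `^ kappa * (1 - (1 - p) * expR t) `^ (- kappa)))%R)%:E.
Proof.
move=> k0 p0 p1 t0 r1.
set r := ((1 - p) * expR t)%R.
have r0 : (0 <= r)%R by rewrite mulr_ge0// ?subr_ge0// expR_ge0.
have rhs0 : (0 <= expR (- t * m%:~R) * (p `^ kappa * (1 - r) `^ (- kappa)))%R.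
  by rewrite mulr_ge0 ?expR_ge0// mulr_ge0// powR_ge0.
set g := Gamma kappa.
have [g0|gn0] := eqVneq g 0%R.
  rewrite eseries0 ?lee_fin// => x _ _.
  by rewrite /negbin_pmf -/g g0 mulr0 invr0 mulr0 !mul0r.
have gIk : gI kappa = g%:E.
  have fk : gI kappa \is a fin_num.
    by apply: contraNT gn0 => /fin_numPn[] H; rewrite /g GammaE H.
  by rewrite /g GammaE fineK.
have g0 : (0 < g)%R.
  by rewrite lt_def gn0 -lee_fin -gIk gI_ge0.
set K := (expR (- t * m%:~R) * p `^ kappa / g)%R.
have K0 : (0 <= K)%R by rewrite /K divr_ge0 ?mulr_ge0 ?expR_ge0 ?powR_ge0// ltW.
have step1 : forall x, (m <= x%:Z)%R -> (negbin_pmf kappa p x)%:E <=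
    K%:E * (gI (x%:R + kappa) * ((r ^+ x / x`!%:R)%R)%:E).
  move=> x mx.
  have := gI_ge0 (x%:R + kappa).
  rewrite /negbin_pmf GammaE.
  case: (gI (x%:R + kappa)) => [a||] //= a0; last first.
    rewrite mul0r !mul0r.
    by rewrite mule_ge0 ?lee_fin// mule_ge0// lee_fin divr_ge0// exprn_ge0.
  rewrite -!EFinM lee_fin -/g.
  have fx : (0 < x`!%:R :> R)%R by rewrite ltr0n fact_gt0.
  have -> : (K * (a * (r ^+ x / x`!%:R)) =
     a / (x`!%:R * g) * p `^ kappa * (1 - p) ^+ x * expR (t * (x%:R - m%:~R)))%R.
    rewrite /K /r exprMn -expRM_natl mulrBr expRD mulNr [(x%:R * t)%R]mulrC.

    field; by rewrite gt_eqF ?gt_eqF.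
  rewrite -[X in (X <= _)%R]mulr1; apply: ler_wpM2l.
    by rewrite mulr_ge0 ?exprn_ge0 ?subr_ge0// mulr_ge0 ?powR_ge0// divr_ge0// mulr_ge0// ltW.
  apply: le_trans (expR_ge1Dx _); rewrite lerDl mulr_ge0// subr_ge0.
  by rewrite -[x%:R]/(x%:Z%:~R :> R) ler_int.
apply: (le_trans (lee_nneseries (v := fun x => K%:E * (gI (x%:R + kappa) * ((r ^+ x / x`!%:R)%R)%:E)) _ step1)).
  by move=> x _ _; rewrite lee_fin /negbin_pmf mulr_ge0 ?exprn_ge0 ?subr_ge0// mulr_ge0 ?powR_ge0// divr_ge0// ?mulr_ge0// ?fine_ge0 ?gI_ge0// ltW.
rewrite eseries_mkcond.
apply: (le_trans (lee_nneseries (v := fun x => K%:E * (gI (x%:R + kappa) * ((r ^+ x / x`!%:R)%R)%:E)) _ _)).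
- move=> x _; case: ifPn => // _.
  by rewrite mule_ge0 ?lee_fin// mule_ge0 ?gI_ge0// lee_fin divr_ge0// exprn_ge0.
- move=> x _; case: ifPn => // _.
  by rewrite mule_ge0 ?lee_fin// mule_ge0 ?gI_ge0// lee_fin divr_ge0// exprn_ge0.
rewrite nneseriesZl; last first.
  by move=> x _; rewrite mule_ge0 ?gI_ge0// lee_fin divr_ge0// exprn_ge0.
rewrite gI_series// gIk -!EFinM lee_fin /K.
rewrite le_eqVlt; apply/orP; left; apply/eqP.
field; by rewrite gt_eqF.
Qed.

Lemma mnegbin (kappa : R) (x : nat) (D : set R) :
  measurable_fun D (fun p => (negbin_pmf kappa p x)%:E).
Proof.
apply/measurable_EFinP; rewrite /negbin_pmf.
apply: measurable_funM; last first.
  apply: measurable_funX; apply: measurable_funB => //.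
apply: measurable_funM => //.
by apply: measurable_funTS; exact: measurable_powR.
Qed.
End S.

Theorem lemmaD1 (R : realType) (kappa h : R) (G : probability R R) (n : nat) (a : R) :
  0 < kappa -> 0 < h < 1 ->
  G `[h, 1%R[%classic = 1%E ->
  (0 < n)%N -> 1 < a ->
  let t := - ln (1 - h) / 2 in
  let A_h := (h / (1 - Num.sqrt (1 - h))) `^ kappa in
  let K := Num.ceil ((a * ln n%:R + ln A_h) / t) in
  forall s : nat,
    (tailG G kappa (K + s%:Z) <= (expR (- t * s%:R) / n%:R `^ a)%:E)%E.
Proof.
move=> k0 /andP[h0 h1] GD n0 a1 t A_h K s.
set q := Num.sqrt (1 - h).
have q0 : 0 < q by rewrite sqrtr_gt0 subr_gt0.
have qq : q ^+ 2 = 1 - h by rewrite sqr_sqrtr// subr_ge0 ltW.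
have q1 : q < 1 by nra.
have t0 : 0 < t.
  by rewrite /t divr_gt0// oppr_gt0 ln_lt0// subr_gt0 h1 /= ltrBlDr ltrDl.
have etq : expR t * q = 1.
  have -> : q = expR (2^-1 * ln (1 - h)).
    by rewrite /q -powR12_sqrt ?subr_ge0 ?ltW// /powR gt_eqF// subr_gt0.
  by rewrite -expRD /t -expR0; congr expR; field.
have Ah0 : 0 < A_h by rewrite /A_h powR_gt0// divr_gt0// subr_gt0.
set m := (K + s%:Z)%R.
pose B := (expR (- t * m%:~R) * A_h)%R.
have B0 : 0 <= B by rewrite mulr_ge0 ?expR_ge0// ltW.
set D := `[h, 1%R[%classic.
have mD : measurable D by exact: measurable_itv.
have ptb : forall p, D p ->
    (\sum_(x <oo | (m <= x%:Z)%R) (negbin_pmf kappa p x)%:E <= B%:E)%E.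
  move=> p; rewrite /D /= in_itv/= => /andP[hp p1].
  have p0 : 0 <= p by rewrite (le_trans (ltW h0)).
  have r_eq : (1 - p) * expR t = (1 - p) / q.
    by apply: (mulIf (lt0r_neq0 q0)); rewrite mulfVK ?gt_eqF// -mulrA etq mulr1.
  have r1 : (1 - p) * expR t < 1.
    by rewrite r_eq ltr_pdivrMr// mul1r; nra.
  apply: le_trans (@tail_pt R kappa p t m k0 p0 (ltW p1) (ltW t0) r1) _.
  rewrite lee_fin /B ler_wpM2l ?expR_ge0//.
  rewrite r_eq /A_h.
  have y0 : 0 < 1 - (1 - p) / q.
    by rewrite subr_gt0 ltr_pdivrMr// mul1r; nra.
  have -> : p `^ kappa * (1 - (1 - p) / q) `^ (- kappa) = (p / (1 - (1 - p) / q)) `^ kappa.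
    rewrite powRM ?invr_ge0 ?(ltW y0)//; congr (_ * _).
    set y := 1 - (1 - p) / q.
    have yi0 : 0 < y^-1 by rewrite invr_gt0.
    have := powRM kappa (ltW y0) (ltW yi0).
    rewrite mulfV ?gt_eqF// powR1 => /(congr1 (fun z => (y `^ kappa)^-1 * z)).
    rewrite mulr1 mulrA mulVf ?mul1r ?gt_eqF ?powR_gt0// => <-.
    by rewrite powRN.
  apply: ge0_ler_powR; rewrite ?nnegrE ?(ltW k0) ?divr_ge0 ?subr_ge0 ?(ltW y0) ?(ltW h0) ?(ltW q1)//.
    by rewrite -subr_ge0 ltW.
  rewrite -/q ler_pdivrMr// mulrC mulrA ler_pdivlMr ?subr_gt0//.
  have -> : (1 - (1 - p) / q) * h = (q - 1 + p) * h / q by field; rewrite gt_eqF.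
  rewrite ler_pdivlMr//.
  have hq : h = 1 - q ^+ 2 by rewrite qq; ring.
  have : 0 <= (1 - q) * (p - h) by apply: mulr_ge0; rewrite subr_ge0 // ltW.
  rewrite hq; nra.
have fGD x : (fG G kappa x = \int[G]_(p in D) (negbin_pmf kappa p x)%:E)%E.
  rewrite /fG [RHS]integral_mkcond.
  apply: ae_eq_integral => //.
  - exact: mnegbin.
  - by apply/(measurable_restrictT _ mD); exact: mnegbin.
  - exists (~` D); split.
    + exact: measurableC.
    + have := @probability_setC _ _ R G D mD.
      by rewrite GD subee.
    + move=> p /= /not_implyP[_ H] Dp; apply: H.
      by rewrite patchE mem_set.
have u0 x p : D p -> (0 <= (negbin_pmf kappa p x)%:E)%E.
  rewrite /D /= in_itv/= => /andP[hp p1].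
  rewrite lee_fin /negbin_pmf mulr_ge0 ?exprn_ge0 ?subr_ge0 ?(ltW p1)// mulr_ge0 ?powR_ge0//.
  by rewrite divr_ge0 ?mulr_ge0// /Gamma /Rintegral fine_ge0// integral_ge0// => y _; rewrite lee_fin mulr_ge0 ?powR_ge0 ?expR_ge0.
rewrite /tailG.
rewrite (@eq_eseriesr _ (fun x => fG G kappa x) (fun x => \int[G]_(p in D) (negbin_pmf kappa p x)%:E)%E (fun x : nat => (m <= x%:Z)%R) 0%N); last by move=> x _; exact: fGD.
rewrite eseries_mkcond.
have -> : (\sum_(x <oo) (if (m <= x%:Z)%R then \int[G]_(p in D) (negbin_pmf kappa p x)%:E else 0%E) =
   \sum_(x <oo) \int[G]_(p in D) (if (m <= x%:Z)%R then (negbin_pmf kappa p x)%:E else 0%E))%E.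
  by apply: eq_eseriesr => x _; case: ifPn => _ //; rewrite integral0.
rewrite -integral_nneseries//; last 2 first.
  - by move=> x /=; case: (m <= x%:Z)%R; [exact: mnegbin | exact: measurable_cst].
  - by move=> x p Dp; case: ifPn => _ //; exact: u0.
under eq_integral do rewrite -eseries_mkcond.
apply: (@le_trans _ _ (\int[G]_(p in D) (B%:E))%E).
  apply: ge0_le_integral => //.
  - by move=> p Dp; apply: nneseries_ge0 => x _ _; exact: u0.
  - apply: (@ge0_emeasurable_sum _ _ _ _ (fun k p => (negbin_pmf kappa p k)%:E) (fun x : nat => (m <= x%:Z)%R)).
      by move=> k x Dx _; exact: u0.
    by move=> k _; exact: mnegbin.
have GD2 : G D = 1%E by exact: GD.
rewrite integral_cst//.
rewrite (_ : (B%:E * G D = B%:E)%E); last by rewrite -[RHS]mule1 -GD.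
rewrite lee_fin /B.
have Kge : (a * ln n%:R + ln A_h) / t <= K%:~R by exact: real_ceil_ge (num_real _).
have tK : a * ln n%:R + ln A_h <= t * K%:~R.
  by move: Kge; rewrite ler_pdivrMr// [_ * t]mulrC.
have pn : n%:R `^ a = expR (a * ln n%:R) by rewrite /powR gt_eqF ?ltr0n.
have AhE : A_h = expR (ln A_h) by rewrite lnK // posrE.
have sE : (s%:Z)%:~R = s%:R :> R by [].
rewrite pn /m intrD mulrDr {1}AhE -!expRD -expRN -expRD ler_expR.
lra.
Qed.
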